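(* Let $\phi \colon R \to S$ be a centralizing ring homomorphism and let \[ \mathcal{C}_\phi = \{ q \in \mathcal{C} R \mid \langle \phi D_q\rangle \in \mathscr{E}(S) \} . \] Then $R\mathcal{C}_\phi$ is a subring of $\widetilde R$ containing $R$. The map $\phi$ extends uniquely to a ring homomorphism $\widetilde{\phi} \colon R\mathcal{C}_\phi \to \widetilde S$ which is centralizing. In particular, $\widetilde{\phi}(\mathcal{C}_\phi) \subseteq \mathcal{C} S$.
   Context: $R$ and $S$ are arbitrary rings with $1$. For a ring $R$, $\operatorname{Q} R$ denotes the symmetric ring of quotients of $R$ (it contains $R$ as a subring), and $\mathscr{E}(R)$ denotes the collection of all two-sided ideals of $R$ having zero left and right annihilator in $R$. For $q \in \operatorname{Q} R$, $D_q := \{ r \in R \mid qRr \subseteq R \text{ and } rRq \subseteq R\}$; this is an ideal belonging to $\mathscr{E}(R)$. The extended center is $\mathcal{C} R := \mathcal{Z}(\operatorname{Q} R)$, the center of $\operatorname{Q} R$ (equal to the centralizer of $R$ in $\operatorname{Q} R$), and $\widetilde R := R(\mathcal{C} R) \subseteq \operatorname{Q} R$ is the subring generated by $R$ and $\mathcal{C} R$; similarly $\mathcal{C} S = \mathcal{Z}(\operatorname{Q} S)$ and $\widetilde S = S(\mathcal{C} S)$. A ring homomorphism $\phi \colon R \to S$ is centralizing if $S$ is generated by $\phi(R)$ and the centralizer $C_S(\phi R) = \{ s \in S \mid s\phi(r) = \phi(r)s \ \forall r \in R\}$; for an ideal $I$ of $R$, $\langle \phi I\rangle$ denotes the ideal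 of $S$ generated by $\phi(I)$, which equals $\phi(I)\,C_S(\phi R) = C_S(\phi R)\,\phi(I)$. *)

(* Defs.v *)
From HB Require Import structures.
From mathcomp Require Import all_boot all_algebra.
Set Implicit Arguments. Unset Strict Implicit. Unset Printing Implicit Defensive.
Import GRing.Theory.
Local Open Scope ring_scope.

Section Defs.
Variable T : pzRingType.

Definition is_ideal (I : T -> Prop) : Prop :=
  [/\ I 0, (forall x y, I x -> I y -> I (x - y)),
      (forall r x, I x -> I (r * x)) & (forall r x, I x -> I (x * r))].

Definition in_E (I : T -> Prop) : Prop :=
  [/\ is_ideal I,
      (forall x, (forall i, I i -> x * i = 0) -> x = 0) &
      (forall x, (forall i, I i -> i * x = 0) -> x = 0)].

Definition is_subring (P : T -> Prop) : Prop :=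
  [/\ P 1, (forall x y, P x -> P y -> P (x - y)) &
      (forall x y, P x -> P y -> P (x * y))].

Definition subring_gen (G : T -> Prop) (x : T) : Prop :=
  forall P, is_subring P -> (forall y, G y -> P y) -> P x.

Definition ideal_gen (G : T -> Prop) (x : T) : Prop :=
  forall P, is_ideal P -> (forall y, G y -> P y) -> P x.

Definition center (x : T) : Prop := forall y, x * y = y * x.

End Defs.

(* Q is (a model of) the symmetric ring of quotients of R, with R embedded
   via iota.  This is the standard characterization (Beidar-Martindale-
   Mikhalev, Rings with Generalized Identities, Prop. 2.5.3), which
   determines Q up to a unique isomorphism over R. *)
Definition is_sym_quot (R Q : pzRingType) (iota : {rmorphism R -> Q}) : Prop :=
  [/\ injective iota,
      (forall q : Q, exists I : R -> Prop, in_E I /\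
          forall i, I i -> (exists r, q * iota i = iota r) /\
                           (exists r, iota i * q = iota r)),
      (forall (q : Q) (I : R -> Prop), in_E I ->
          (forall i, I i -> q * iota i = 0) -> q = 0),
      (forall (q : Q) (I : R -> Prop), in_E I ->
          (forall i, I i -> iota i * q = 0) -> q = 0) &
      (forall (I : R -> Prop) (f g : R -> R), in_E I ->
          (forall x y, I x -> I y -> f (x + y) = f x + f y) ->
          (forall x y, I x -> I y -> g (x + y) = g x + g y) ->
          (forall x r, I x -> f (x * r) = f x * r) ->
          (forall x r, I x -> g (r * x) = r * g x) ->
          (forall x y, I x -> I y -> x * f y = g x * y) ->
          exists q : Q, forall x, I x ->
            q * iota x = iota (f x) /\ iota x * q = iota (g x))].

Definition Dq (R Q : pzRingType) (iota : {rmorphism R -> Q}) (q : Q) (r : R)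
  : Prop :=
  forall s : R, (exists t, q * iota s * iota r = iota t) /\
                (exists t, iota r * iota s * q = iota t).

(* R~ = subring of Q generated by R and the extended center C R = Z(Q) *)
Definition tilde (R Q : pzRingType) (iota : {rmorphism R -> Q}) : Q -> Prop :=
  subring_gen (fun x => (exists r, x = iota r) \/ center x).

Definition centralizing_on (U V : pzRingType) (A : U -> Prop) (B : V -> Prop)
  (f : U -> V) : Prop :=
  forall y, B y <-> subring_gen
    (fun s => (exists x, A x /\ s = f x) \/
              (B s /\ forall x, A x -> s * f x = f x * s)) y.

Definition centralizing (R S : pzRingType) (phi : {rmorphism R -> S}) : Prop :=
  centralizing_on (fun _ => True) (fun _ => True) phi.

Definition Cphi (R S QR : pzRingType) (iR : {rmorphism R -> QR})
  (phi : {rmorphism R -> S}) (q : QR) : Prop :=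
  center q /\ in_E (ideal_gen (fun s => exists r, Dq iR q r /\ s = phi r)).

Definition RCphi (R S QR : pzRingType) (iR : {rmorphism R -> QR})
  (phi : {rmorphism R -> S}) (x : QR) : Prop :=
  exists l : seq (R * QR), (forall p, p \in l -> Cphi iR phi p.2) /\
    x = \sum_(p <- l) iR p.1 * p.2.

Definition rhom_on (U V : pzRingType) (A : U -> Prop) (B : V -> Prop)
  (f : U -> V) : Prop :=
  [/\ (forall x, A x -> B (f x)), f 1 = 1 &
      (forall x y, A x -> A y -> f (x + y) = f x + f y /\ f (x * y) = f x * f y)].

(* Main.v *)
Require Import Defs.
From HB Require Import structures.
From mathcomp Require Import all_boot all_algebra.
From Stdlib Require Import ClassicalEpsilon.
Import GRing.Theory.
Local Open Scope ring_scope.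

Section Basic.
Variable T : pzRingType.

Lemma sr0 (P : T -> Prop) : is_subring P -> P 0.
Proof. by case=> h1 hB _; rewrite -(subrr 1); apply: hB. Qed.
Lemma srN (P : T -> Prop) x : is_subring P -> P x -> P (- x).
Proof. move=> sP hx; rewrite -sub0r; case: (sP) => _ hB _; apply: hB => //; exact: (sr0 P sP). Qed.
Lemma srD (P : T -> Prop) x y : is_subring P -> P x -> P y -> P (x + y).
Proof. move=> sP hx hy; rewrite -[y]opprK; case: (sP) => _ hB _; apply: hB => //; exact: (srN P y sP hy). Qed.

Lemma idD (P : T -> Prop) x y : is_ideal P -> P x -> P y -> P (x + y).
Proof. case=> h0 hB _ _ hx hy; have ->: x + y = x - (0 - y) by rewrite sub0r opprK.
by apply: (hB) => //; exact: (hB). Qed.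

Lemma subring_gen_sr (G : T -> Prop) : is_subring (subring_gen G).
Proof.
split.
- by move=> P [] h1 _ _ _.
- by move=> x y hx hy P sP hG; case: (sP) => _ hB _; apply: hB; [apply: hx|apply: hy].
- by move=> x y hx hy P sP hG; case: (sP) => _ _ hM; apply: hM; [apply: hx|apply: hy].
Qed.

Lemma ideal_gen_id (G : T -> Prop) : is_ideal (ideal_gen G).
Proof.
split.
- by move=> P [] h0 _ _ _.
- by move=> x y hx hy P iP hG; case: (iP) => _ hB _ _; apply: hB; [apply: hx|apply: hy].
- by move=> r x hx P iP hG; case: (iP) => _ _ hL _; apply: hL; apply: hx.
- by move=> r x hx P iP hG; case: (iP) => _ _ _ hR; apply: hR; apply: hx.
Qed.

Lemma ideal_gen_in (G : T -> Prop) y : G y -> ideal_gen G y.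
Proof. by move=> hy P _ hG; apply: hG. Qed.

Lemma subring_gen_in (G : T -> Prop) y : G y -> subring_gen G y.
Proof. by move=> hy P _ hG; apply: hG. Qed.
End Basic.

Section Gen.
Variables R S : pzRingType.
Variable phi : {rmorphism R -> S}.
Hypothesis cent : centralizing phi.

Definition IG (D : R -> Prop) := ideal_gen (fun s => exists r, D r /\ s = phi r).

Lemma cent_ind (P : S -> Prop) : is_subring P -> (forall r, P (phi r)) ->
  (forall c, (forall r, c * phi r = phi r * c) -> P c) -> forall s, P s.
Proof.
move=> sP H1 H2 s; have [h _] := cent s; apply: (h I) => // y [[x [_ ->]]|[_ hc]].
  exact: H1.
by apply: H2 => r; apply: hc.
Qed.

Lemma annihL (T : pzRingType) (j : {rmorphism S -> T}) (D : R -> Prop)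
  (Dl : forall s e, D e -> D (s * e)) (w : T) :
  (forall e, D e -> w * j (phi e) = 0) -> forall x, IG D x -> w * j x = 0.
Proof.
have K : forall r w, (forall e, D e -> w * j (phi e) = 0) ->
    forall e, D e -> w * j r * j (phi e) = 0.
  apply: (cent_ind (fun r => forall w, (forall e, D e -> w * j (phi e) = 0) ->
    forall e, D e -> w * j r * j (phi e) = 0)).
  - split.
    + by move=> w0 hw e he; rewrite rmorph1 mulr1; apply: hw.
    + by move=> x y hx hy w0 hw e he; rewrite rmorphB mulrBr mulrBl hx // hy // subrr.
    + move=> x y hx hy w0 hw e he; rewrite rmorphM mulrA; apply: hy => // e' he'.
      exact: hx.
  - by move=> r w0 hw e he; rewrite -mulrA -rmorphM -rmorphM; apply: hw; apply: Dl.
  - by move=> c hc w0 hw e he; rewrite -mulrA -rmorphM hc rmorphM mulrA hw // mul0r.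
move=> hw x hx; apply: (hx (fun x => forall w, (forall e, D e -> w * j (phi e) = 0) -> w * j x = 0)) => //.
- split.
  + by move=> w0 _; rewrite rmorph0 mulr0.
  + by move=> a b ha hb w0 h0; rewrite rmorphB mulrBr ha // hb // subrr.
  + by move=> r a ha w0 h0; rewrite rmorphM mulrA; apply: ha => e he; apply: K.
  + by move=> r a ha w0 h0; rewrite rmorphM mulrA ha // mul0r.
- by move=> y [r [hr ->]] w0 h0; apply: h0.
Qed.

Lemma annihR (T : pzRingType) (j : {rmorphism S -> T}) (D : R -> Prop)
  (Dr : forall s e, D e -> D (e * s)) (w : T) :
  (forall e, D e -> j (phi e) * w = 0) -> forall x, IG D x -> j x * w = 0.
Proof.
have K : forall r w, (forall e, D e -> j (phi e) * w = 0) ->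
    forall e, D e -> j (phi e) * (j r * w) = 0.
  apply: (cent_ind (fun r => forall w, (forall e, D e -> j (phi e) * w = 0) ->
    forall e, D e -> j (phi e) * (j r * w) = 0)).
  - split.
    + by move=> w0 hw e he; rewrite rmorph1 mul1r; apply: hw.
    + by move=> x y hx hy w0 hw e he; rewrite rmorphB mulrBl mulrBr hx // hy // subrr.
    + move=> x y hx hy w0 hw e he; rewrite rmorphM -mulrA; apply: hx => // e' he'.
      exact: hy.
  - by move=> r w0 hw e he; rewrite mulrA -rmorphM -rmorphM; apply: hw; apply: Dr.
  - by move=> c hc w0 hw e he; rewrite mulrA -rmorphM -hc rmorphM -mulrA hw // mulr0.
move=> hw x hx; apply: (hx (fun x => forall w, (forall e, D e -> j (phi e) * w = 0) -> j x * w = 0)) => //.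
- split.
  + by move=> w0 _; rewrite rmorph0 mul0r.
  + by move=> a b ha hb w0 h0; rewrite rmorphB mulrBl ha // hb // subrr.
  + by move=> r a ha w0 h0; rewrite rmorphM -mulrA ha // mulr0.
  + by move=> r a ha w0 h0; rewrite rmorphM -mulrA; apply: ha => e he; apply: K.
- by move=> y [r [hr ->]] w0 h0; apply: h0.
Qed.

Lemma prodE (D1 D2 D : R -> Prop)
  (D1l : forall s e, D1 e -> D1 (s * e)) (D1r : forall s e, D1 e -> D1 (e * s))
  (D2l : forall s e, D2 e -> D2 (s * e)) (D2r : forall s e, D2 e -> D2 (e * s))
  (hp : forall a b, D1 a -> D2 b -> D (a * b)) :
  in_E (IG D1) -> in_E (IG D2) -> in_E (IG D).
Proof.
case=> _ E1l E1r [_ E2l E2r]; split; first exact: ideal_gen_id.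
- move=> x hx; apply: E1l => i hi; rewrite -[i]/(idfun i).
  apply: (@annihL S idfun D1 D1l) hi => a ha.
  apply: E2l => k hk; rewrite -[k]/(idfun k).
  apply: (@annihL S idfun D2 D2l) hk => b hb /=.
  by rewrite -mulrA -rmorphM; apply: hx; apply: ideal_gen_in; exists (a * b); split => //; apply: hp.
- move=> x hx; apply: E2r => i hi; rewrite -[i]/(idfun i).
  apply: (@annihR S idfun D2 D2r) hi => b hb.
  apply: E1r => k hk; rewrite -[k]/(idfun k).
  apply: (@annihR S idfun D1 D1r) hk => a ha /=.
  by rewrite mulrA -rmorphM; apply: hx; apply: ideal_gen_in; exists (a * b); split => //; apply: hp.
Qed.
End Gen.

Arguments IG {R S} phi D.
Arguments cent_ind {R S phi} cent P.
Arguments annihL {R S phi} cent {T} j {D} Dl {w} hw {x} hx.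
Arguments annihR {R S phi} cent {T} j {D} Dr {w} hw {x} hx.
Arguments prodE {R S phi} cent {D1 D2 D}.

Section Main.
Variables R S QR QS : pzRingType.
Variables (iR : {rmorphism R -> QR}) (iS : {rmorphism S -> QS}) (phi : {rmorphism R -> S}).
Hypotheses (hR : is_sym_quot iR) (hS : is_sym_quot iS) (cent : centralizing phi).

Lemma iR_inj : injective iR. Proof. by case: hR. Qed.

Lemma Dq_l q s e : Dq iR q e -> Dq iR q (s * e).
Proof.
move=> h u; have [[t1 h1] _] := h (u * s); have [_ [t2 h2]] := h u; split.
  by exists t1; rewrite -h1 !rmorphM !mulrA.
by exists (s * t2); rewrite !rmorphM -h2 !mulrA.
Qed.

Lemma Dq_r q s e : Dq iR q e -> Dq iR q (e * s).
Proof.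
move=> h u; have [[t1 h1] _] := h u; have [_ [t2 h2]] := h (s * u); split.
  by exists (t1 * s); rewrite !rmorphM -h1 !mulrA.
by exists t2; rewrite -h2 !rmorphM !mulrA.
Qed.

Lemma Dq_t q e : Dq iR q e -> exists t, q * iR e = iR t.
Proof. by move=> h; have [[t ht] _] := h 1; exists t; rewrite -ht rmorph1 mulr1. Qed.

Lemma key q e t s : center q -> q * iR e = iR t -> q * iR (s * e) = iR (s * t).
Proof. by move=> hq h; rewrite !rmorphM mulrA hq -mulrA h. Qed.

Lemma key2 q e t e' t' : center q -> q * iR e = iR t -> q * iR e' = iR t' ->
  t * e' = e * t'.
Proof. by move=> hq h h'; apply: iR_inj; rewrite !rmorphM -h -h' hq mulrA. Qed.

Arguments Dq_l {q} s {e}.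
Arguments Dq_r {q} s {e}.
Arguments Dq_t {q e}.
Arguments key {q e t} s.
Arguments key2 {q e t e' t'}.

Definition spec (q : QR) (w : QS) := center w /\
  forall e t, Dq iR q e -> q * iR e = iR t -> w * iS (phi e) = iS (phi t).

Lemma qt_ex q : Cphi iR phi q -> exists w, spec q w.
Proof.
case=> hq hE.
set I := IG phi (Dq iR q).
pose ch (x y : S) := forall e t, Dq iR q e -> q * iR e = iR t -> y * phi e = x * phi t.
have Ann : forall z, (forall e, Dq iR q e -> z * phi e = 0) -> z = 0.
  move=> z hz; case: hE => _ hl _; apply: hl => i hi; rewrite -[i]/(idfun i).
  exact: (annihL cent idfun (@Dq_l q) hz hi).
have uq : forall x y1 y2, ch x y1 -> ch x y2 -> y1 = y2.
  move=> x y1 y2 h1 h2; apply/eqP; rewrite -subr_eq0; apply/eqP; apply: Ann => e he.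
  have [t ht] := Dq_t he.
  by rewrite mulrBl (h1 _ _ he ht) (h2 _ _ he ht) subrr.
have Iid : is_ideal I := ideal_gen_id _ _.
have ex : forall x, I x -> exists y, ch x y.
  have Kr : forall r x, (exists y, ch x y) -> exists y, ch (x * r) y.
    apply: (cent_ind cent (fun r => forall x, (exists y, ch x y) -> exists y, ch (x * r) y)).
    - split.
      + by move=> x hx; rewrite mulr1.
      + move=> a b ha hb x hx; have [y1 h1] := ha x hx; have [y2 h2] := hb x hx.
        exists (y1 - y2) => e t he ht.
        by rewrite mulrBl (h1 _ _ he ht) (h2 _ _ he ht) mulrBr mulrBl.
      + by move=> a b ha hb x hx; rewrite mulrA; apply: hb; exact: ha.
    - move=> s x [y hy]; exists (y * phi s) => e t he ht.
      by rewrite -mulrA -rmorphM (hy _ _ (Dq_l s he) (key s hq ht)) rmorphM mulrA.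
    - move=> c hc x [y hy]; exists (y * c) => e t he ht.
      by rewrite -mulrA hc mulrA (hy _ _ he ht) -mulrA -hc mulrA.
  move=> x hx; apply: (hx (fun x => exists y, ch x y)).
  - split.
    + by exists 0 => e t _ _; rewrite !mul0r.
    + move=> a b [y1 h1] [y2 h2]; exists (y1 - y2) => e t he ht.
      by rewrite !mulrBl (h1 _ _ he ht) (h2 _ _ he ht).
    + by move=> r a [y h]; exists (r * y) => e t he ht; rewrite -!mulrA (h _ _ he ht).
    + by move=> r a ha; apply: Kr.
  - move=> y [d [hd ->]]; have [t0 ht0] := Dq_t hd; exists (phi t0) => e t he ht.
    by rewrite -!rmorphM (key2 hq ht0 ht).
pose F x := epsilon (inhabits 0) (ch x).
have Fs : forall x, I x -> ch x (F x).
  by move=> x hx; apply: epsilon_spec; exact: ex.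
case: (Iid) => I0 IB IL IR.
have ID : forall x y, I x -> I y -> I (x + y) by move=> x y; apply: idD.
have FB : forall x y, I x -> I y -> F (x - y) = F x - F y.
  move=> x y hx hy; apply: (uq (x - y)); first by apply: Fs; apply: IB.
  by move=> e t he ht; rewrite !mulrBl (Fs x hx _ _ he ht) (Fs y hy _ _ he ht).
have FD : forall x y, I x -> I y -> F (x + y) = F x + F y.
  move=> x y hx hy; apply: (uq (x + y)); first by apply: Fs; apply: ID.
  by move=> e t he ht; rewrite !mulrDl (Fs x hx _ _ he ht) (Fs y hy _ _ he ht).
have FL : forall r x, I x -> F (r * x) = r * F x.
  move=> r x hx; apply: (uq (r * x)); first by apply: Fs; apply: IL.
  by move=> e t he ht; rewrite -!mulrA (Fs x hx _ _ he ht).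
have FR : forall r x, I x -> F (x * r) = F x * r.
  apply: (cent_ind cent (fun r => forall x, I x -> F (x * r) = F x * r)).
  - split.
    + by move=> x _; rewrite !mulr1.
    + by move=> a b ha hb x hx; rewrite mulrBr FB ?ha ?hb ?mulrBr //; apply: IR.
    + move=> a b ha hb x hx; rewrite mulrA (hb (x * a)); last exact: IR.
      by rewrite ha // mulrA.
  - move=> s x hx; apply: (uq (x * phi s)); first by apply: Fs; apply: IR.
    move=> e t he ht.
    by rewrite -mulrA -rmorphM (Fs x hx _ _ (Dq_l s he) (key s hq ht)) rmorphM mulrA.
  - move=> c hc x hx; apply: (uq (x * c)); first by apply: Fs; apply: IR.
    by move=> e t he ht; rewrite -mulrA hc mulrA (Fs x hx _ _ he ht) -mulrA -hc mulrA.
case: (hS) => _ h2 h3 _ h5.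
have [w hw] := h5 I F F hE FD FD (fun x r hx => FR r x hx) (fun x r hx => FL r x hx)
  (fun x y hx hy => etrans (esym (FL x y hy)) (FR y x hx)).
exists w; split.
- move=> v; have [J [hJ hJv]] := h2 v.
  apply/eqP; rewrite -subr_eq0; apply/eqP; apply: (h3 _ J hJ) => j hj.
  apply: (h3 _ I hE) => x hx.
  have [[s hs] _] := hJv j hj.
  have e1 : w * v * iS j * iS x = iS (s * F x).
    by rewrite -(mulrA w v) hs -mulrA -rmorphM (hw _ (IL s x hx)).1 FL.
  have e2 : v * w * iS j * iS x = iS (s * F x).
    by rewrite -!mulrA -rmorphM (hw _ (IL j x hx)).1 FL // rmorphM mulrA hs -rmorphM.
  by rewrite !mulrBl e1 e2 subrr.
- move=> e t he ht.
  have hpe : I (phi e) by apply: ideal_gen_in; exists e.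
  rewrite (hw _ hpe).1; congr (iS _); apply: (uq (phi e)); first exact: Fs.
  by move=> e' t' he' ht'; rewrite -!rmorphM (key2 hq ht ht').
Qed.

Definition qt q := epsilon (inhabits 0) (spec q).
Lemma qt_spec q : Cphi iR phi q -> spec q (qt q).
Proof. by move=> h; apply: epsilon_spec; exact: qt_ex. Qed.
Arguments qt_spec {q}.

Lemma Dq1 r : Dq iR 1 r.
Proof. by move=> s; split; [exists (s * r) | exists (r * s)]; rewrite ?mul1r ?mulr1 rmorphM. Qed.

Lemma Cphi1 : Cphi iR phi 1.
Proof.
split; first by move=> y; rewrite mul1r mulr1.
have g : IG phi (Dq iR 1) (phi 1) by apply: ideal_gen_in; exists 1; split => //; apply: Dq1.
split; first exact: ideal_gen_id.
- by move=> x hx; have := hx _ g; rewrite rmorph1 mulr1.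
- by move=> x hx; have := hx _ g; rewrite rmorph1 mul1r.
Qed.

Lemma Dq_mul q1 q2 a b : center q1 -> center q2 -> Dq iR q1 a -> Dq iR q2 b ->
  Dq iR (q1 * q2) (a * b).
Proof.
move=> h1 h2 ha hb s; split.
- have [[t1 e1] _] := ha s; have [[t2 e2] _] := hb t1.
  by exists t2; rewrite -e2 -e1 rmorphM h1 !mulrA.
- have [_ [t1 e1]] := hb s; have [_ [t2 e2]] := ha t1.
  by exists t2; rewrite -e2 -e1 rmorphM h1 !mulrA.
Qed.
Arguments Dq_mul {q1 q2 a b}.

Lemma Cphi_mul q1 q2 : Cphi iR phi q1 -> Cphi iR phi q2 -> Cphi iR phi (q1 * q2).
Proof.
case=> h1 E1 [h2 E2]; split.
  by move=> y; rewrite -mulrA h2 mulrA h1 mulrA.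
apply: (prodE cent (@Dq_l q1) (@Dq_r q1) (@Dq_l q2) (@Dq_r q2) _ E1 E2).
by move=> a b ha hb; apply: Dq_mul.
Qed.
Arguments Cphi_mul {q1 q2}.

Definition sumR (l : seq (R * QR)) := \sum_(p <- l) iR p.1 * p.2.
Definition sumS (l : seq (R * QR)) := \sum_(p <- l) iS (phi p.1) * qt p.2.
Definition allC (l : seq (R * QR)) := forall p, p \in l -> Cphi iR phi p.2.
Definition Dl (l : seq (R * QR)) d := forall p, p \in l -> Dq iR p.2 d.

Lemma sumR_cons p l : sumR (p :: l) = iR p.1 * p.2 + sumR l.
Proof. by rewrite /sumR big_cons. Qed.
Lemma sumS_cons p l : sumS (p :: l) = iS (phi p.1) * qt p.2 + sumS l.
Proof. by rewrite /sumS big_cons. Qed.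
Lemma sumR_cat l1 l2 : sumR (l1 ++ l2) = sumR l1 + sumR l2.
Proof. by rewrite /sumR big_cat. Qed.
Lemma sumS_cat l1 l2 : sumS (l1 ++ l2) = sumS l1 + sumS l2.
Proof. by rewrite /sumS big_cat. Qed.
Lemma sumR1 r q : sumR [:: (r, q)] = iR r * q.
Proof. by rewrite /sumR big_seq1. Qed.
Lemma sumS1 r q : sumS [:: (r, q)] = iS (phi r) * qt q.
Proof. by rewrite /sumS big_seq1. Qed.
Lemma sumR0 : sumR [::] = 0. Proof. by rewrite /sumR big_nil. Qed.
Lemma sumS0 : sumS [::] = 0. Proof. by rewrite /sumS big_nil. Qed.

Lemma allC_cons p l : allC (p :: l) -> Cphi iR phi p.2 /\ allC l.
Proof. by move=> h; split => [|p' hp']; apply: h; rewrite inE ?eqxx ?hp' ?orbT. Qed.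
Arguments allC_cons {p l}.
Lemma allC_cat l1 l2 : allC l1 -> allC l2 -> allC (l1 ++ l2).
Proof. by move=> h1 h2 p; rewrite mem_cat => /orP [] ?; [exact: h1 | exact: h2]. Qed.
Arguments allC_cat {l1 l2}.
Lemma allC1 r q : Cphi iR phi q -> allC [:: (r, q)].
Proof. by move=> h p; rewrite inE => /eqP ->. Qed.
Arguments allC1 r {q}.

Lemma Dl_l l s e : Dl l e -> Dl l (s * e).
Proof. by move=> h p hp; apply: Dq_l; apply: h. Qed.
Lemma Dl_r l s e : Dl l e -> Dl l (e * s).
Proof. by move=> h p hp; apply: Dq_r; apply: h. Qed.

Lemma E_list l : allC l -> in_E (IG phi (Dl l)).
Proof.
elim: l => [_|p l IH /allC_cons [hp hl]].
  have g : IG phi (Dl [::]) (phi 1).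
    by apply: ideal_gen_in; exists 1; split => // p; rewrite in_nil.
  split; first exact: ideal_gen_id.
  - by move=> x hx; have := hx _ g; rewrite rmorph1 mulr1.
  - by move=> x hx; have := hx _ g; rewrite rmorph1 mul1r.
apply: (prodE cent (@Dq_l p.2) (@Dq_r p.2) (@Dl_l l) (@Dl_r l) _ hp.2 (IH hl)).
move=> a b ha hb p'; rewrite inE => /orP [/eqP -> | hp'].
  exact: Dq_r.
by apply: Dq_l; apply: hb.
Qed.
Arguments E_list {l}.

Lemma mul_d l d : allC l -> Dl l d ->
  exists u, sumR l * iR d = iR u /\ sumS l * iS (phi d) = iS (phi u).
Proof.
elim: l => [_ _|p l IH /allC_cons [hp hl] hd].
  by exists 0; rewrite sumR0 sumS0 !mul0r !rmorph0.
have hdl : Dl l d by move=> p' hp'; apply: hd; rewrite inE hp' orbT.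
have hdp : Dq iR p.2 d by apply: hd; rewrite inE eqxx.
have [u [e1 e2]] := IH hl hdl; have [t ht] := Dq_t hdp.
exists (p.1 * t + u); rewrite sumR_cons sumS_cons !mulrDl e1 e2 !rmorphD !rmorphM.
split; congr (_ + _).
  by rewrite -mulrA ht.
by rewrite -mulrA ((qt_spec hp).2 _ _ hdp ht).
Qed.
Arguments mul_d {l d}.

Lemma sum_wd l1 l2 : allC l1 -> allC l2 -> sumR l1 = sumR l2 -> sumS l1 = sumS l2.
Proof.
move=> h1 h2 e; have hE := E_list (allC_cat h1 h2).
apply/eqP; rewrite -subr_eq0; apply/eqP.
case: (hS) => _ _ h3 _ _; apply: (h3 _ _ hE) => x hx.
apply: (annihL cent iS (@Dl_l _) _ hx) => d hd.
have hd1 : Dl l1 d by move=> p hp; apply: hd; rewrite mem_cat hp.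
have hd2 : Dl l2 d by move=> p hp; apply: hd; rewrite mem_cat hp orbT.
have [u1 [a1 b1]] := mul_d h1 hd1; have [u2 [a2 b2]] := mul_d h2 hd2.
have eu : u1 = u2 by apply: iR_inj; rewrite -a1 -a2 e.
by rewrite mulrBl b1 b2 eu subrr.
Qed.
Arguments sum_wd {l1 l2}.

Definition f x := epsilon (inhabits 0)
  (fun y => exists l, [/\ allC l, x = sumR l & y = sumS l]).

Lemma f_eq l : allC l -> f (sumR l) = sumS l.
Proof.
move=> hl; rewrite /f; set P := (fun y => _).
have [l' [hl' e ->]] : P (epsilon (inhabits 0) P).
  by apply: epsilon_spec; exists (sumS l), l.
exact: sum_wd hl' hl (esym e).
Qed.
Arguments f_eq {l}.

Lemma qt1 : qt 1 = 1.
Proof.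
have [_ h] := qt_spec Cphi1.
have e : 1 * iR 1 = iR 1 by rewrite mul1r.
by have := h 1 1 (Dq1 1) e; rewrite !rmorph1 !mulr1.
Qed.

Lemma f_iR r : f (iR r) = iS (phi r).
Proof. by have := f_eq (allC1 r Cphi1); rewrite sumR1 sumS1 qt1 !mulr1. Qed.

Lemma qt_mul q1 q2 : Cphi iR phi q1 -> Cphi iR phi q2 -> qt (q1 * q2) = qt q1 * qt q2.
Proof.
move=> c1 c2; have c12 := Cphi_mul c1 c2.
have [z1 s1] := qt_spec c1; have [z2 s2] := qt_spec c2; have [_ s12] := qt_spec c12.
case: (hS) => _ _ h3 _ _.
apply/eqP; rewrite -subr_eq0; apply/eqP.
apply: (h3 _ _ c1.2) => x hx; apply: (annihL cent iS (@Dq_l q1) _ hx) => a ha.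
apply: (h3 _ _ c2.2) => y hy; apply: (annihL cent iS (@Dq_l q2) _ hy) => b hb.
have [ta eta] := Dq_t ha; have [tb etb] := Dq_t hb.
have hab := Dq_mul c1.1 c2.1 ha hb.
have e12 : q1 * q2 * iR (a * b) = iR (ta * tb).
  by rewrite !rmorphM -eta -etb !mulrA -(mulrA q1 q2) c2.1 mulrA.
have e3 : qt q1 * qt q2 * iS (phi (a * b)) = iS (phi (ta * tb)).
  rewrite !rmorphM !mulrA -(mulrA (qt q1)) (z2 (iS (phi a))) mulrA (s1 _ _ ha eta).
  by rewrite -mulrA (s2 _ _ hb etb).
by rewrite -mulrA -(rmorphM iS) -(rmorphM phi) mulrBl (s12 _ _ hab e12) e3 subrr.
Qed.
Arguments qt_mul {q1 q2}.

Lemma mul_list l1 l2 : allC l1 -> allC l2 -> exists l3,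
  [/\ allC l3, sumR l3 = sumR l1 * sumR l2 & sumS l3 = sumS l1 * sumS l2].
Proof.
elim: l1 => [_ _ | p l1 IH /allC_cons [hp hl1] hl2].
  by exists [::]; rewrite sumR0 sumS0 !mul0r; split => // p; rewrite in_nil.
have [l3 [h3 e1 e2]] := IH hl1 hl2.
exists ([seq (p.1 * p'.1, p.2 * p'.2) | p' <- l2] ++ l3); split.
- apply: allC_cat => // p'' /mapP [p' hp' ->] /=; apply: Cphi_mul => //; exact: hl2.
- rewrite sumR_cat e1 sumR_cons mulrDl; congr (_ + _).
  rewrite /sumR big_map mulr_sumr; apply: eq_bigr => p' _ /=; rewrite rmorphM.
  by rewrite !mulrA; congr (_ * _); rewrite -!mulrA hp.1.
- rewrite sumS_cat e2 sumS_cons mulrDl; congr (_ + _).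
  rewrite /sumS big_map mulr_sumr; apply: eq_big_seq => p' hp' /=.
  rewrite (qt_mul hp (hl2 _ hp')) !rmorphM.
  by rewrite !mulrA; congr (_ * _); rewrite -!mulrA (qt_spec hp).1.
Qed.
Arguments mul_list {l1 l2}.

Lemma RC_intro l : allC l -> RCphi iR phi (sumR l).
Proof. by move=> h; exists l. Qed.
Arguments RC_intro {l}.

Lemma RC_iRq r q : Cphi iR phi q -> RCphi iR phi (iR r * q).
Proof. by move=> h; have := RC_intro (allC1 r h); rewrite sumR1. Qed.
Arguments RC_iRq r {q}.

Lemma RC_iR r : RCphi iR phi (iR r).
Proof. by have := RC_iRq r Cphi1; rewrite mulr1. Qed.

Lemma RC_q q : Cphi iR phi q -> RCphi iR phi q.
Proof. by move=> h; have := RC_iRq 1 h; rewrite rmorph1 mul1r. Qed.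
Arguments RC_q {q}.

Lemma tildeR l : allC l -> tilde iR (sumR l).
Proof.
have sr := subring_gen_sr _ (fun x => (exists r, x = iR r) \/ center x).
elim: l => [_|p l IH /allC_cons [hp hl]]; first by rewrite sumR0; exact: sr0 _ _ sr.
rewrite sumR_cons; apply: (srD _ _ _ _ sr); last exact: IH.
case: (sr) => _ _ hM; apply: hM; apply: subring_gen_in; [by left; exists p.1 | right; exact: hp.1].
Qed.
Arguments tildeR {l}.

Lemma tildeS l : allC l -> tilde iS (sumS l).
Proof.
have sr := subring_gen_sr _ (fun x => (exists r, x = iS r) \/ center x).
elim: l => [_|p l IH /allC_cons [hp hl]]; first by rewrite sumS0; exact: sr0 _ _ sr.
rewrite sumS_cons; apply: (srD _ _ _ _ sr); last exact: IH.
case: (sr) => _ _ hM; apply: hM; apply: subring_gen_in;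
  [by left; exists (phi p.1) | right; exact: (qt_spec hp).1].
Qed.
Arguments tildeS {l}.

Definition Gf s := (exists x, RCphi iR phi x /\ s = f x) \/
  (tilde iS s /\ forall x, RCphi iR phi x -> s * f x = f x * s).

Lemma main :
  (is_subring (RCphi iR phi) /\
   (forall x, RCphi iR phi x -> tilde iR x) /\
   (forall r, RCphi iR phi (iR r))) /\
  (exists f : QR -> QS,
     [/\ rhom_on (RCphi iR phi) (tilde iS) f,
         (forall r, f (iR r) = iS (phi r)),
         (forall g : QR -> QS, rhom_on (RCphi iR phi) (tilde iS) g ->
            (forall r, g (iR r) = iS (phi r)) ->
            forall x, RCphi iR phi x -> g x = f x),
         centralizing_on (RCphi iR phi) (tilde iS) f &
         (forall q, Cphi iR phi q -> center (f q))]).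
Proof.
split.
  split; last split.
  - split.
    + by have := RC_iR 1; rewrite rmorph1.
    + move=> x y [l1 [h1 ->]] [l2 [h2 ->]].
      have -> : sumR l1 - sumR l2 = sumR (l1 ++ map (fun p => (- p.1, p.2)) l2).
        rewrite sumR_cat /sumR big_map -sumrN; congr (_ + _).
        by apply: eq_bigr => p _ /=; rewrite rmorphN mulNr.
      apply: RC_intro; apply: allC_cat => // p /mapP [p' hp' ->]; exact: (h2 p' hp').
    + move=> x y [l1 [h1 ->]] [l2 [h2 ->]].
      have [l3 [h3 e _]] := mul_list h1 h2; rewrite -e; exact: RC_intro.
  - by move=> x [l [hl ->]]; exact: tildeR.
  - exact: RC_iR.
case: (hS) => _ _ h3 _ _.
have rh : rhom_on (RCphi iR phi) (tilde iS) f.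
  split.
  - by move=> x [l [hl ->]]; rewrite f_eq //; exact: tildeS.
  - by have := f_iR 1; rewrite !rmorph1.
  - move=> x y [l1 [h1 ->]] [l2 [h2 ->]]; split.
      by rewrite -sumR_cat !f_eq ?sumS_cat //; exact: allC_cat.
    by have [l3 [h3' e1 e2]] := mul_list h1 h2; rewrite -e1 !f_eq.
exists f; split => //.
- exact: f_iR.
- move=> g [gB g1 gM] gi x [l [hl ->]]; change (g (sumR l) = f (sumR l)); rewrite f_eq //.
  have gq : forall q, Cphi iR phi q -> g q = qt q.
    move=> q hq; apply/eqP; rewrite -subr_eq0; apply/eqP.
    apply: (h3 _ _ hq.2) => z hz; apply: (annihL cent iS (@Dq_l q) _ hz) => d hd.
    have [t ht] := Dq_t hd.
    rewrite mulrBl ((qt_spec hq).2 _ _ hd ht) -gi -(gM q (iR d) (RC_q hq) (RC_iR d)).2.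
    by rewrite ht gi subrr.
  elim: l hl => [_|p l IH /allC_cons [hp hl]].
    by rewrite sumR0 sumS0 -(rmorph0 iR) gi !rmorph0.
  rewrite sumR_cons sumS_cons (gM _ _ (RC_iRq p.1 hp) (RC_intro hl)).1.
  by rewrite (gM _ _ (RC_iR p.1) (RC_q hp)).2 gi gq // IH.
- move=> y; change (tilde iS y <-> subring_gen Gf y); split.
  + move=> hy; apply: hy; first exact: subring_gen_sr.
    move=> z [[s ->]|hz].
    * have sG := subring_gen_sr _ Gf.
      apply: (cent_ind cent (fun s => subring_gen Gf (iS s))).
      - case: (sG) => s1 sB sM; split.
        + by rewrite rmorph1.
        + by move=> a b ha hb; rewrite rmorphB; apply: sB.
        + by move=> a b ha hb; rewrite rmorphM; apply: sM.
      - move=> r; apply: subring_gen_in; left; exists (iR r); split; first exact: RC_iR.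
        by rewrite f_iR.
      - move=> c hc; apply: subring_gen_in; right; split.
          by apply: subring_gen_in; left; exists c.
        move=> x [l [hl ->]]; rewrite f_eq // /sumS mulr_sumr mulr_suml.
        apply: eq_big_seq => p hp.
        rewrite mulrA -rmorphM hc rmorphM -!mulrA; congr (_ * _).
        by rewrite (qt_spec (hl _ hp)).1.
    * apply: subring_gen_in; right; split; first by apply: subring_gen_in; right.
      by move=> x _; apply: hz.
  + move=> hy; apply: hy; first exact: subring_gen_sr.
    move=> z [[x [hx ->]] | [hz _]] //.
    by case: rh => hB _ _; apply: hB.
- move=> q hq.
  have -> : q = sumR [:: (1, q)] by rewrite sumR1 rmorph1 mul1r.
  rewrite f_eq; last exact: allC1.
  by rewrite sumS1 !rmorph1 mul1r; exact: (qt_spec hq).1.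
Qed.
End Main.

Theorem lemma1p1 (R S QR QS : pzRingType)
  (iR : {rmorphism R -> QR}) (iS : {rmorphism S -> QS})
  (phi : {rmorphism R -> S}) :
  is_sym_quot iR -> is_sym_quot iS -> centralizing phi ->
  (is_subring (RCphi iR phi) /\
   (forall x, RCphi iR phi x -> tilde iR x) /\
   (forall r, RCphi iR phi (iR r))) /\
  (exists f : QR -> QS,
     [/\ rhom_on (RCphi iR phi) (tilde iS) f,
         (forall r, f (iR r) = iS (phi r)),
         (forall g : QR -> QS, rhom_on (RCphi iR phi) (tilde iS) g ->
            (forall r, g (iR r) = iS (phi r)) ->
            forall x, RCphi iR phi x -> g x = f x),
         centralizing_on (RCphi iR phi) (tilde iS) f &
         (forall q, Cphi iR phi q -> center (f q))]).
Proof. by move=> hR hS cent; exact: (@main R S QR QS iR iS phi hR hS cent). Qed.
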